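(* Let $\{E_i\}_{i\in I}$ be a family of $F$-Banach spaces, each regarded as a complete bornological $F$-vector space (bounded subsets being the norm-bounded subsets). Then the direct sum $\bigoplus_{i\in I}E_i$ in the category of complete bornological $F$-vector spaces is proper.
   Context: $F$ is a field complete with respect to a non-trivial non-Archimedean absolute value, $F^{\circ}$ its unit ball, $\pi$ a pseudo-uniformiser. A bornology on an $F$-vector space $E$ is a collection of ''bounded'' subsets closed under subsets, containing singletons, closed under finite unions, under multiplication by nonzero scalars, and under $B\mapsto F^{\circ}B$. The direct sum $\bigoplus_i E_i$ of complete bornological spaces has as underlying space the algebraic direct sum, and a subset is bounded iff it is contained in a finite sum $\sum_i B_i$ of bounded subsets $B_i\subseteq E_i$. A sequence $(e_n)$ in a bornological space $E$ converges (bornologically) to $0$ if there is a bounded $B\subseteq E$ such that for every $\lambda\in F\setminus\{0\}$ there is $N$ with $e_n\in\lambda B$ for all $n\ge N$; it converges to $e$ if $(e-e_n)$ converges to $0$. A subset $C$ is (bornologically) closed if every sequence of elements of $C$ converging to some element converges to an element of $C$. $E$ is proper if its bornology has a basis of closed subsets (a basis being a family of bounded sets such that every bounded set lies in a finite union of members). *)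

(* Defs.v *)
From HB Require Import structures.
From mathcomp Require Import all_boot all_order all_algebra.
From mathcomp Require Import reals.
From Stdlib Require Lists.List.
Set Implicit Arguments. Unset Strict Implicit. Unset Printing Implicit Defensive.
Import Order.TTheory GRing.Theory Num.Theory.
Local Open Scope ring_scope.

Record complete_nonarch_abs (R : realType) (F : fieldType) (abs : F -> R) : Prop := {
  nabs_eq0 : forall x, abs x = 0 <-> x = 0;
  nabs_ge0 : forall x, 0 <= abs x;
  nabsM : forall x y, abs (x * y) = abs x * abs y;
  nabs_ultra : forall x y, abs (x + y) <= Num.max (abs x) (abs y);
  nabs_nontrivial : exists x, abs x <> 0 /\ abs x <> 1;
  nabs_complete : forall u : nat -> F,
    (forall eps, 0 < eps -> exists N, forall m n, (N <= m)%N -> (N <= n)%N ->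
        abs (u m - u n) < eps) ->
    exists l, forall eps, 0 < eps -> exists N, forall n, (N <= n)%N ->
        abs (u n - l) < eps
}.

Record is_banach (R : realType) (F : fieldType) (abs : F -> R) (E : lmodType F)
    (norm : E -> R) : Prop := {
  bnorm_eq0 : forall x, norm x = 0 <-> x = 0;
  bnormZ : forall (a : F) (x : E), norm (a *: x) = abs a * norm x;
  bnorm_ultra : forall x y, norm (x + y) <= Num.max (norm x) (norm y);
  bnorm_complete : forall u : nat -> E,
    (forall eps, 0 < eps -> exists N, forall m n, (N <= m)%N -> (N <= n)%N ->
        norm (u m - u n) < eps) ->
    exists l, forall eps, 0 < eps -> exists N, forall n, (N <= n)%N ->
        norm (u n - l) < eps
}.

Definition norm_bounded (R : realType) (E : Type) (norm : E -> R) (B : E -> Prop) :=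
  exists r : R, forall x, B x -> norm x <= r.

Section DirectSum.
Variables (R : realType) (F : fieldType) (I : Type) (E : I -> lmodType F)
  (norm : forall i, E i -> R).

(* Underlying space of the algebraic direct sum: finitely supported families. *)
Definition finsupp (x : forall i, E i) : Prop :=
  exists s : seq I, forall i, ~ Stdlib.Lists.List.In i s -> x i = 0.

Definition dsum := {x : forall i, E i | finsupp x}.

(* Bounded sets of the direct sum: contained in a finite sum sum_{i in J} B_i
   of bounded B_i subset E_i (embedded in the i-th summand). *)
Definition dsum_bounded (B : dsum -> Prop) : Prop :=
  exists (J : seq I) (Bs : forall i, E i -> Prop),
    (forall i, norm_bounded (@norm i) (Bs i)) /\
    forall x, B x -> forall i,
      (Stdlib.Lists.List.In i J -> Bs i (proj1_sig x i)) /\ (~ Stdlib.Lists.List.In i J -> proj1_sig x i = 0).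

Definition in_scaled (lam : F) (B : dsum -> Prop) (d : forall i, E i) : Prop :=
  exists b, B b /\ forall i, d i = lam *: proj1_sig b i.

Definition dsum_conv0 (d : nat -> forall i, E i) : Prop :=
  exists B, dsum_bounded B /\
    forall lam : F, lam <> 0 -> exists N, forall n, (N <= n)%N -> in_scaled lam B (d n).

Definition dsum_conv (s : nat -> dsum) (e : dsum) : Prop :=
  dsum_conv0 (fun n i => proj1_sig e i - proj1_sig (s n) i).

Definition dsum_closed (C : dsum -> Prop) : Prop :=
  forall s : nat -> dsum, (forall n, C (s n)) ->
    (exists e, dsum_conv s e) -> exists e, C e /\ dsum_conv s e.

Definition dsum_proper : Prop :=
  exists Basis : (dsum -> Prop) -> Prop,
    (forall A, Basis A -> dsum_bounded A /\ dsum_closed A) /\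
    forall B, dsum_bounded B ->
      exists As : seq (dsum -> Prop), (forall A, Stdlib.Lists.List.In A As -> Basis A) /\
        forall x, B x -> exists A, Stdlib.Lists.List.In A As /\ A x.

End DirectSum.

(* Main.v *)
Require Import Defs.
From HB Require Import structures.
From mathcomp Require Import all_boot all_order all_algebra.
From mathcomp Require Import reals.
From mathcomp Require Import lra.
Import Order.TTheory GRing.Theory Num.Theory.
Local Open Scope ring_scope.

Lemma bern (R : realType) (h : R) n : 0 <= h -> 1 + n%:R * h <= (1 + h) ^+ n.
Proof.
move=> h0; elim: n => [|n IH]; first by rewrite expr0 mul0r addr0.
rewrite exprS.
apply: (le_trans _ (ler_wpM2l _ IH)); last by rewrite addr_ge0.
rewrite mulrDr mulr1 mulrDl mul1r -natr1 mulrDl mul1r.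
have : 0 <= h * (n%:R * h) by rewrite mulr_ge0 // mulr_ge0.
lra.
Qed.

Lemma geom_small (R : realType) (a d : R) : 0 < a -> a < 1 -> 0 < d ->
  exists n, a ^+ n < d.
Proof.
move=> a0 a1 d0.
set h := a^-1 - 1.
have h0 : 0 < h by rewrite /h subr_gt0 invf_gt1.
exists (Num.bound ((d * h)^-1)).
set n := Num.bound _.
have hb : (d * h)^-1 < n%:R by apply: archi_boundP; rewrite invr_ge0 mulr_ge0 // ltW.
have := @bern R h n (ltW h0).
rewrite /h addrCA subrr addr0 exprVn => hB.
have nh : d^-1 < n%:R * h.
  have -> : d^-1 = (d * h)^-1 * h by rewrite invfM -mulrA mulVf ?mulr1 // gt_eqF.
  by rewrite ltr_pM2r.
have : d^-1 < (a ^+ n)^-1 by move: hB nh; set X := n%:R * h; lra.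
rewrite ltf_pV2 ?posrE ?exprn_gt0 //.
Qed.

Section Main.
Variables (R : realType) (F : fieldType) (abs : F -> R)
  (habs : complete_nonarch_abs abs).

Lemma abs1 : abs 1 = 1.
Proof.
have h := nabsM habs 1 1; rewrite mulr1 in h.
have n0 : abs 1 != 0 by apply/eqP => /(nabs_eq0 habs) /eqP; rewrite oner_eq0.
by apply: (mulfI n0); rewrite -h mulr1.
Qed.

Lemma absX (y : F) n : abs (y ^+ n) = abs y ^+ n.
Proof. elim: n => [|n IH]; first by rewrite !expr0 abs1. by rewrite !exprS nabsM // IH. Qed.

Lemma abs_neq0 (y : F) : y != 0 -> abs y != 0.
Proof. by move=> /eqP y0; apply/eqP => /(nabs_eq0 habs). Qed.

Lemma small_lam (d : R) : 0 < d -> exists lam : F, lam <> 0 /\ abs lam < d.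
Proof.
move=> d0.
have [y [y1 y2]] : exists y : F, 0 < abs y /\ abs y < 1.
  have [x [x0 x1]] := nabs_nontrivial habs.
  have xg : 0 < abs x by rewrite lt_def (nabs_ge0 habs) andbT; apply/eqP.
  have [xl|xg1] := ltP (abs x) 1; first by exists x.
  have xn0 : x != 0 by apply/eqP => xe; apply: x0; rewrite xe; apply/(nabs_eq0 habs).
  have ax : abs x^-1 = (abs x)^-1.
    apply: (@mulfI _ (abs x)); first by rewrite gt_eqF.
    by rewrite -(nabsM habs) !mulfV ?abs1 // gt_eqF.
  exists x^-1; rewrite ax invr_gt0 xg; split => //.
  rewrite invf_lt1 //. rewrite lt_neqAle xg1 andbT; apply/eqP => /esym; exact: x1.
have [n hn] := @geom_small R _ _ y1 y2 d0.
exists (y ^+ n); split; last by rewrite absX.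
apply/eqP; rewrite expf_eq0 negb_and; apply/orP; right.
by apply/eqP => y0; move: y1; rewrite y0 (proj2 (nabs_eq0 habs 0)) // ltxx.
Qed.

Variables (E : lmodType F) (norm : E -> R) (hb : is_banach abs norm).

Lemma norm_ge0 x : 0 <= norm x.
Proof.
rewrite leNgt; apply/negP => hx.
have h := bnorm_ultra hb x (- x).
rewrite subrr (proj2 (bnorm_eq0 hb 0)) // -scaleN1r (bnormZ hb) in h.
have a0 : 0 < abs (-1).
  rewrite lt_def (nabs_ge0 habs) andbT; apply: abs_neq0; by rewrite oppr_eq0 oner_eq0.
have : abs (-1) * norm x < 0 by rewrite pmulr_rlt0.
move: h; rewrite /Num.max; case: ifP => _ h1 h2; lra.
Qed.

Lemma lim_le (y : E) (rho : R) : 0 <= rho ->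
  (forall eps, 0 < eps -> exists z, norm z <= rho /\ norm (y - z) < eps) ->
  norm y <= rho.
Proof.
move=> r0 H; rewrite leNgt; apply/negP => hy.
have [z [z1 z2]] := H (norm y - rho) (ltac:(by rewrite subr_gt0)).
have := bnorm_ultra hb z (y - z); rewrite addrC subrK.
rewrite /Num.max; case: ifP => _ h; lra.
Qed.

End Main.
From Stdlib Require Import Classical.

Theorem lemma2p24 (R : realType) (F : fieldType) (abs : F -> R)
  (habs : complete_nonarch_abs abs)
  (I : Type) (E : I -> lmodType F) (norm : forall i, E i -> R)
  (hban : forall i, is_banach abs (@norm i)) :
  dsum_proper norm.
Proof.
exists (fun A => dsum_bounded norm A /\ dsum_closed norm A); split => // B [J [Bs [hBs hB]]].
pose Cl i (y : E i) := forall r, (forall z, Bs i z -> norm i z <= r) -> norm i y <= Num.max r 1.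
pose A (x : dsum E) := forall i, (List.In i J -> Cl i (proj1_sig x i)) /\
   (~ List.In i J -> proj1_sig x i = 0).
exists [:: A]; split; last first.
  move=> x Bx; exists A; split; first by left.
  move=> i; have [h1 h2] := hB x Bx i; split => // /h1 hi r hr.
  by apply: (le_trans (hr _ hi)); rewrite le_max lexx.
move=> A0 [<-|//]; split.
  exists J, Cl; split; last by move=> x Ax i; exact: Ax i.
  move=> i; have [r hr] := hBs i; exists (Num.max r 1) => y; exact.
move=> s hs [e he]; exists e; split => //.
have key : forall i eps, 0 < eps -> exists n, norm i (proj1_sig e i - proj1_sig (s n) i) < eps.
  move=> i eps eps0.
  have [B' [[J' [Bs' [hBs' hB']]] conv]] := he.
  have [r' hr'] := hBs' i.
  set c := Num.max r' 1.
  have c0 : 0 < c by rewrite lt_max ltr01 orbT.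
  have [lam [lam0 hlam]] := @small_lam _ _ _ habs _ (divr_gt0 eps0 c0).
  have [N hN] := conv lam lam0.
  have [b [Bb hbe]] := hN N (leqnn N).
  exists N; rewrite hbe (bnormZ (hban i)).
  have nb : norm i (proj1_sig b i) <= c.
    have [h1 h2] := hB' b Bb i.
    case: (classic (List.In i J')) => hi.
      by apply: (le_trans (hr' _ (h1 hi))); rewrite le_max lexx.
    by rewrite (h2 hi) (proj2 (bnorm_eq0 (hban i) 0)) // le_max ler01 orbT.
  apply: (le_lt_trans (ler_wpM2l (nabs_ge0 habs lam) nb)).
  by rewrite -ltr_pdivlMr.
move=> i; split.
  move=> hi r hr; apply: (@lim_le _ _ _ _ _ (hban i)); first by rewrite le_max ler01 orbT.
  move=> eps eps0; have [n hn] := key i eps eps0.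
  exists (proj1_sig (s n) i); split => //.
  exact: ((hs n i).1 hi r hr).
move=> hi; apply/(bnorm_eq0 (hban i)); apply/le_anti; rewrite (@norm_ge0 _ _ _ habs _ _ (hban i)) andbT.
apply: (@lim_le _ _ _ _ _ (hban i)) => // eps eps0.
have [n hn] := key i eps eps0.
exists (proj1_sig (s n) i); split => //.
by rewrite ((hs n i).2 hi) (proj2 (bnorm_eq0 (hban i) 0)).
Qed.
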